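(* Consider tuples $(A,p,q_I,q_J,\langle S,\pi\rangle,\langle S',\pi'\rangle)$, where: - $A\subset\mathcal{A}$ is a firm; - $p$ is a full-support skill distribution; - $q_I,q_J$ are full-support perceptions with $q_I\succsim_{LR}q_J$; - $\langle S,\pi\rangle,\langle S',\pi'\rangle$ are signal structures with $\langle S',\pi'\rangle\succsim_G\langle S,\pi\rangle$. Consider the following five properties: (i) $A\subset\mathcal{A}_M$; (ii) $\langle S',\pi'\rangle$ is MLR; (iii) $q_I\succsim_{LR}p$; (iv) $p\succsim_{LR}q_J$; (v) $\langle S',\pi'\rangle$ is slightly more informative than $\langle S,\pi\rangle$ for firm $A$ at perceptions $q_I$ and $q_J$. For each $k\in\{\mathrm{(i)},\dots,\mathrm{(v)}\}$ there exists such a tuple (for some finite $\Theta\subset\mathbb{R}$ with $|\Theta|\ge2$) with three features: it violates property $k$; it satisfies the other four properties; and it violates $$W_A(p,q_I,\langle S',\pi'\rangle)-W_A(p,q_J,\langle S',\pi'\rangle)\le W_A(p,q_I,\langle S,\pi\rangle)-W_A(p,q_J,\langle S,\pi\rangle).$$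
   Context: Let $\Theta\subset\mathbb{R}$ be a finite set of skill types with $|\Theta|\ge2$. Tasks are vectors $a\in\mathcal{A}:=\mathbb{R}^\Theta$. A firm is a non-empty finite set $A\subset\mathcal{A}$. It is monotone if $A\subset\mathcal{A}_M:=\{a: a(\theta')>a(\theta)\text{ whenever }\theta'>\theta\}$. A signal structure $\langle S,\pi\rangle$ consists of a non-empty finite set $S$ and a map $\pi:S\times\Theta\to[0,1]$ with $\sum_s\pi(s|\theta)=1$, such that each $s$ has $\pi(s|\theta)>0$ for some $\theta$. Pay: - $p,q\in\Delta(\Theta)$ have full support. - $q_{\langle S,\pi\rangle}(\theta|s):=q(\theta)\pi(s|\theta)/\sum_{\theta'}q(\theta')\pi(s|\theta')$. - $w_A(s,q,\langle S,\pi\rangle):=\max_{a\in A}\sum_\theta q_{\langle S,\pi\rangle}(\theta|s)a(\theta)$. - $W_A(p,q,\langle S,\pi\rangle):=\sum_\theta p(\theta)\sum_s\pi(s|\theta)w_A(s,q,\langle S,\pi\rangle)$. Orders: - $q'\succsim_{LR}q$ means $q(\theta)q'(\theta')\ge q(\theta')q'(\theta)$ whenever $\theta'>\theta$. - $\langle S',\pi'\rangle\succsim_G\langle S,\pi\rangle$ means there exists a garbling kernel $g:S\times S'\to[0,1]$ with $\sum_s g(s|s')=1$ for each $s'$ and $\pi(s|\theta)=\sum_{s'}g(s|s')\pi'(s'|\theta)$ for all $s,\theta$. - $\langle S,\pi\rangle$ is MLR if $S\subset\mathbb{R}$ and $\pi(s|\theta)\pi(s'|\theta')\ge\pi(s|\theta')\pi(s'|\theta)$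 whenever $s'>s$, $\theta'>\theta$. Slightness: $\langle S',\pi'\rangle$ is slightly more informative than $\langle S,\pi\rangle$ for firm $A$ at perception $q$ if there is a garbling kernel $g$ from $\langle S',\pi'\rangle$ to $\langle S,\pi\rangle$ such that, for all $s\in S$, $s'\in S'$ with $g(s|s')>0$, $$\arg\max_{a\in A}\sum_\theta q_{\langle S,\pi\rangle}(\theta|s)a(\theta)\cap\arg\max_{a\in A}\sum_\theta q_{\langle S',\pi'\rangle}(\theta|s')a(\theta)\neq\varnothing.$$ *)

(* Defs.v *)
From HB Require Import structures.
From mathcomp Require Import all_boot all_order all_algebra.
From mathcomp Require Import finmap.
From mathcomp Require Import Rstruct.
From Stdlib Require Import Rdefinitions.

Set Implicit Arguments.
Unset Strict Implicit.
Unset Printing Implicit Defensive.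

Import Order.TTheory GRing.Theory Num.Theory.
Local Open Scope ring_scope.
Local Open Scope fset_scope.

Notation real := Rdefinitions.R.

Section Model.
Variable Theta : {fset real}.

Definition task := {ffun Theta -> real}.

Definition firm (A : {fset task}) : Prop := A != fset0.

Definition monotone_firm (A : {fset task}) : Prop :=
  forall a, a \in A -> forall t t' : Theta, val t < val t' -> a t < a t'.

Definition full_support (p : Theta -> real) : Prop :=
  (forall t, 0 < p t) /\ \sum_(t : Theta) p t = 1.

Definition LR_ge (q' q : Theta -> real) : Prop :=
  forall t t' : Theta, val t < val t' -> q t' * q' t <= q t * q' t'.

Definition signal_structure (S : {fset real}) (pi : S -> Theta -> real) : Prop :=
  [/\ forall s t, 0 <= pi s t <= 1,
      forall t, \sum_(s : S) pi s t = 1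
    & forall s, exists t, 0 < pi s t].

Definition posterior (S : {fset real}) (q : Theta -> real)
  (pi : S -> Theta -> real) (s : S) (t : Theta) : real :=
  q t * pi s t / \sum_(t' : Theta) q t' * pi s t'.

Definition expval (b : Theta -> real) (a : task) : real :=
  \sum_(t : Theta) b t * a t.

(* max over a in A (A non-empty; the default value is attained by the
   head of A, hence irrelevant). *)
Definition maxA (A : {fset task}) (F : task -> real) : real :=
  \big[Num.max/F (head [ffun=> 0] A)]_(a <- A) F a.

Definition wage (A : {fset task}) (S : {fset real}) (q : Theta -> real)
  (pi : S -> Theta -> real) (s : S) : real :=
  maxA A (expval (posterior q pi s)).

Definition Wage (A : {fset task}) (p q : Theta -> real) (S : {fset real})
  (pi : S -> Theta -> real) : real :=
  \sum_(t : Theta) p t * \sum_(s : S) pi s t * wage A q pi s.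

Definition garbling_kernel (S S' : {fset real}) (pi : S -> Theta -> real)
  (pi' : S' -> Theta -> real) (g : S -> S' -> real) : Prop :=
  [/\ forall s s', 0 <= g s s' <= 1,
      forall s', \sum_(s : S) g s s' = 1
    & forall s t, pi s t = \sum_(s' : S') g s s' * pi' s' t].

Definition blackwell_ge (S' : {fset real}) (pi' : S' -> Theta -> real)
  (S : {fset real}) (pi : S -> Theta -> real) : Prop :=
  exists g, garbling_kernel pi pi' g.

Definition MLR (S : {fset real}) (pi : S -> Theta -> real) : Prop :=
  forall (s s' : S) (t t' : Theta), val s < val s' -> val t < val t' ->
    pi s t' * pi s' t <= pi s t * pi s' t'.

Definition is_argmax (A : {fset task}) (b : Theta -> real) (a : task) : Prop :=
  a \in A /\ forall a', a' \in A -> expval b a' <= expval b a.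

Definition slightly_more_inf (A : {fset task}) (q : Theta -> real)
  (S' : {fset real}) (pi' : S' -> Theta -> real)
  (S : {fset real}) (pi : S -> Theta -> real) : Prop :=
  exists g, garbling_kernel pi pi' g /\
    forall (s : S) (s' : S'), 0 < g s s' ->
      exists a, is_argmax A (posterior q pi s) a /\
                is_argmax A (posterior q pi' s') a.

(* The five properties (i)-(v), indexed 0..4. *)
Definition property (k : nat) (A : {fset task}) (p qI qJ : Theta -> real)
  (S : {fset real}) (pi : S -> Theta -> real)
  (S' : {fset real}) (pi' : S' -> Theta -> real) : Prop :=
  match k with
  | 0 => monotone_firm A
  | 1 => MLR pi'
  | 2 => LR_ge qI p
  | 3 => LR_ge p qJ
  | _ => slightly_more_inf A qI pi' pi /\ slightly_more_inf A qJ pi' pi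
  end.

End Model.

(* Main.v *)
Require Import Defs.
From HB Require Import structures.
From mathcomp Require Import all_boot all_order all_algebra.
From mathcomp Require Import finmap.
From mathcomp Require Import Rstruct.
From mathcomp Require Import ring lra.
Import Order.TTheory GRing.Theory Num.Theory.
Local Open Scope fset_scope.
Local Open Scope ring_scope.

Lemma sum1 (X : {fset real}) (x : real) (hx : x \in X)
  (hall : forall t : X, val t = x) (F : X -> real) :
  \sum_(t : X) F t = F (FSetSub hx).
Proof.
rewrite (bigD1 (FSetSub hx)) //= big1 ?addr0 // => t /eqP ht; case: ht.
by apply: val_inj; rewrite /= hall.
Qed.

Lemma sum2 (X : {fset real}) (x y : real) (hx : x \in X) (hy : y \in X)
  (nxy : x != y) (hall : forall t : X, val t = x \/ val t = y) (F : X -> real) :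
  \sum_(t : X) F t = F (FSetSub hx) + F (FSetSub hy).
Proof.
rewrite (bigD1 (FSetSub hx)) //= (bigD1 (FSetSub hy)) /=; last first.
  by apply/eqP => /(congr1 val) /= /eqP; rewrite eq_sym (negbTE nxy).
rewrite big1 ?addr0 // => t /andP [/eqP h1 /eqP h2].
by case: (hall t) => e; [case: h1|case: h2]; apply: val_inj; rewrite /= e.
Qed.

Lemma sum3 (X : {fset real}) (x y z : real) (hx : x \in X) (hy : y \in X) (hz : z \in X)
  (nxy : x != y) (nxz : x != z) (nyz : y != z)
  (hall : forall t : X, [\/ val t = x, val t = y | val t = z]) (F : X -> real) :
  \sum_(t : X) F t = F (FSetSub hx) + F (FSetSub hy) + F (FSetSub hz).
Proof.
rewrite (bigD1 (FSetSub hx)) //= (bigD1 (FSetSub hy)) /=; last first.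
  by apply/eqP => /(congr1 val) /= /eqP; rewrite eq_sym (negbTE nxy).
rewrite (bigD1 (FSetSub hz)) /=; last first.
  apply/andP; split; apply/eqP => /(congr1 val) /= /eqP.
    by rewrite eq_sym (negbTE nxz).
  by rewrite eq_sym (negbTE nyz).
rewrite big1 ?addr0 ?addrA // => t /andP [/andP [/eqP h1 /eqP h2] /eqP h3].
by case: (hall t) => e; [case: h1|case: h2|case: h3]; apply: val_inj; rewrite /= e.
Qed.

Lemma r10 : (1 : real) != 0. Proof. exact: oner_neq0. Qed.
Lemma r20 : (2 : real) != 0. Proof. by rewrite pnatr_eq0. Qed.
Lemma r21 : (2 : real) != 1. Proof. by rewrite (eqr_nat real 2 1). Qed.
Lemma r01 : (0 : real) != 1. Proof. by rewrite eq_sym r10. Qed.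
Lemma r02 : (0 : real) != 2. Proof. by rewrite eq_sym r20. Qed.
Lemma r12 : (1 : real) != 2. Proof. by rewrite eq_sym r21. Qed.

Definition T1 : {fset real} := [fset 0].
Definition T2 : {fset real} := [fset 0; 1].
Definition T3 : {fset real} := [fset 0; 1; 2].
Lemma T1_0 : (0:real) \in T1. Proof. by rewrite !inE. Qed.
Lemma T2_0 : (0:real) \in T2. Proof. by rewrite !inE eqxx. Qed.
Lemma T2_1 : (1:real) \in T2. Proof. by rewrite !inE eqxx orbT. Qed.
Lemma T3_0 : (0:real) \in T3. Proof. by rewrite !inE eqxx. Qed.
Lemma T3_1 : (1:real) \in T3. Proof. by rewrite !inE eqxx !orbT. Qed.
Lemma T3_2 : (2:real) \in T3. Proof. by rewrite !inE eqxx !orbT. Qed.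
Lemma T1all (t : T1) : val t = 0.
Proof. by case: t => x /=; rewrite !inE => /eqP. Qed.
Lemma T2all (t : T2) : val t = 0 \/ val t = 1.
Proof. by case: t => x /=; rewrite !inE => /orP [] /eqP; auto. Qed.
Lemma T3all (t : T3) : [\/ val t = 0, val t = 1 | val t = 2].
Proof.
case: t => x /=; rewrite !inE => /orP [/orP [/eqP->|/eqP->]|/eqP->].
- by constructor 1.
- by constructor 2.
- by constructor 3.
Qed.
Lemma sumT1 (F : T1 -> real) : \sum_(t : T1) F t = F (FSetSub T1_0).
Proof. exact: sum1 T1all F. Qed.
Lemma sumT2 (F : T2 -> real) : \sum_(t : T2) F t = F (FSetSub T2_0) + F (FSetSub T2_1).
Proof. exact: sum2 r01 T2all F. Qed.
Lemma sumT3 (F : T3 -> real) : \sum_(t : T3) F t = F (FSetSub T3_0) + F (FSetSub T3_1) + F (FSetSub T3_2).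
Proof. exact: sum3 r01 r02 r12 T3all F. Qed.
Lemma cardT2 : (2 <= #|` T2|)%N. Proof. by rewrite cardfs2 r01. Qed.
Lemma cardT3 : (2 <= #|` T3|)%N.
Proof.
apply: leq_trans cardT2 _; apply: fsubset_leq_card; apply/fsubsetP => x.
by rewrite !inE => /orP [] ->; rewrite ?orbT.
Qed.

Definition pk (c0 c1 c2 x : real) : real :=
  if x == 0 then c0 else if x == 1 then c1 else c2.
Arguments pk : simpl never.
Lemma pk0 c0 c1 c2 : pk c0 c1 c2 0 = c0. Proof. by rewrite /pk eqxx. Qed.
Lemma pk1 c0 c1 c2 : pk c0 c1 c2 1 = c1.
Proof. by rewrite /pk eqxx (negbTE r10). Qed.
Lemma pk2 c0 c1 c2 : pk c0 c1 c2 2 = c2.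
Proof. by rewrite /pk (negbTE r20) (negbTE r21). Qed.

Section Gen.
Variable Theta : {fset real}.

Lemma maxA_eq (A : {fset task Theta}) (F : task Theta -> real) a : a \in A ->
  (forall a', a' \in A -> F a' <= F a) -> Defs.maxA A F = F a.
Proof.
move=> aA ub; rewrite /Defs.maxA.
have h0 : head [ffun=> 0] A \in A.
  have : a \in enum_fset A by [].
  case E: (enum_fset A) => [|x s] //= _.
  by have : x \in enum_fset A by rewrite E mem_head.
have hub : forall (s : seq (task Theta)) x0, x0 <= F a -> {subset s <= A} ->
    \big[Num.max/x0]_(i <- s) F i <= F a.
  elim=> [|x s IH] x0 hx0 sA; first by rewrite big_nil.
  rewrite big_cons ge_max ub ?sA ?mem_head //= IH // => y ys.
  by apply: sA; rewrite in_cons ys orbT.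
have hlb : forall (s : seq (task Theta)) x0, a \in s ->
    F a <= \big[Num.max/x0]_(i <- s) F i.
  elim=> [|x s IH] x0 //; rewrite in_cons big_cons le_max => /orP [/eqP <-|h].
    by rewrite lexx.
  by rewrite IH ?orbT.
apply/le_anti/andP; split; first by apply: hub => //; apply: ub.
exact: hlb.
Qed.

Lemma maxA1 (a : task Theta) (F : task Theta -> real) : Defs.maxA [fset a] F = F a.
Proof. by apply: maxA_eq; [rewrite inE | move=> a' /fset1P ->]. Qed.

Lemma expval_post (S : {fset real}) q (pi : S -> Theta -> real) s a :
  expval (posterior q pi s) a =
  (\sum_(t : Theta) q t * pi s t * a t) / (\sum_(t : Theta) q t * pi s t).
Proof.
rewrite /expval /posterior mulr_suml; apply: eq_bigr => t _.
by rewrite mulrAC.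
Qed.
End Gen.

Definition pin (Theta : {fset real}) : T1 -> Theta -> real := fun _ _ => 1.

Section Gen2.
Variable Theta : {fset real}.


Lemma kernel_pin (S' : {fset real}) (pi' : S' -> Theta -> real) :
  (forall t, \sum_(s : S') pi' s t = 1) ->
  garbling_kernel (pin Theta) pi' (fun _ _ => 1).
Proof.
move=> H; split.
- by move=> s s'; rewrite ler01 lexx.
- by move=> s'; rewrite sumT1.
- move=> s t; rewrite /pin (eq_bigr (fun s' => pi' s' t)) ?H // => s' _; exact: mul1r.
Qed.

Lemma bw_pin (S' : {fset real}) (pi' : S' -> Theta -> real) :
  (forall t, \sum_(s : S') pi' s t = 1) -> blackwell_ge pi' (pin Theta).
Proof. by move=> H; exists (fun _ _ => 1); apply: kernel_pin. Qed.

Lemma slight1 (a : task Theta) q (S' : {fset real}) (pi' : S' -> Theta -> real) :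
  (forall t, \sum_(s : S') pi' s t = 1) ->
  slightly_more_inf [fset a] q pi' (pin Theta).
Proof.
move=> H; exists (fun _ _ => 1); split; first exact: kernel_pin.
move=> s s' _; exists a; split; split; rewrite ?inE //;
  by move=> a' /fset1P ->.
Qed.

Lemma firm1 (a : task Theta) : firm [fset a].
Proof. by apply/fset0Pn; exists a; rewrite inE. Qed.
End Gen2.

Lemma ss_pin2 : signal_structure (pin T2).
Proof.
split.
- by move=> s t; rewrite /pin ler01 lexx.
- by move=> t; rewrite sumT1.
- by move=> s; exists (FSetSub T2_0); rewrite /pin ltr01.
Qed.
Lemma ss_pin3 : signal_structure (pin T3).
Proof.
split.
- by move=> s t; rewrite /pin ler01 lexx.
- by move=> t; rewrite sumT1.
- by move=> s; exists (FSetSub T3_0); rewrite /pin ltr01.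
Qed.

Ltac wcomp := rewrite /Wage /wage ?sumT3 ?sumT2 ?sumT1 ?maxA1 !expval_post
  ?sumT3 ?sumT2 ?sumT1 /= ?ffunE /=.
Ltac pks := rewrite /= ?(pk0, pk1, pk2).
Ltac c2 t := case: (T2all t) => ->.
Ltac c3 t := case: (T3all t) => ->.


Definition Ex (k : nat) : Prop :=
  exists (Theta : {fset real}), (2 <= #|` Theta|)%N /\
  exists (A : {fset task Theta}) (p qI qJ : Theta -> real)
         (S : {fset real}) (pi : S -> Theta -> real)
         (S' : {fset real}) (pi' : S' -> Theta -> real),
    [/\ firm A, full_support p, full_support qI, full_support qJ
      & LR_ge qI qJ] /\
    [/\ signal_structure pi, signal_structure pi' & blackwell_ge pi' pi] /\
    ~ property k A p qI qJ pi pi' /\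
    (forall j : nat, (j < 5)%N -> j <> k -> property j A p qI qJ pi pi') /\
    ~ (Wage A p qI pi' - Wage A p qJ pi' <= Wage A p qI pi - Wage A p qJ pi).


Definition f2 (c0 c1 : real) : T2 -> real := fun t => pk c0 c1 0 (val t).
Definition sg2 (y0 y1 x0 x1 : real) : T2 -> T2 -> real :=
  fun s t => pk (pk y0 y1 0 (val t)) (pk x0 x1 0 (val t)) 0 (val s).
Definition tk2 (c0 c1 : real) : task T2 := [ffun t => pk c0 c1 0 (val t)].
Ltac U := rewrite /f2 /sg2 /tk2 /=.

Lemma fs2 (c0 c1 : real) : 0 < c0 -> 0 < c1 -> c0 + c1 = 1 -> full_support (f2 c0 c1).
Proof.
move=> h0 h1 hs; split; first by move=> t; U; c2 t; pks.
by rewrite sumT2; U; pks.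
Qed.

Lemma sum_sg2 y0 y1 x0 x1 : y0 + x0 = 1 -> y1 + x1 = 1 ->
  forall t, \sum_(s : T2) sg2 y0 y1 x0 x1 s t = 1.
Proof. move=> h0 h1 t; rewrite sumT2; U; c2 t; pks; lra. Qed.

Lemma mono2 c0 c1 : c0 < c1 -> monotone_firm [fset tk2 c0 c1].
Proof.
move=> h a /fset1P -> t t'; U; rewrite !ffunE; c2 t; c2 t'; pks; intros; lra.
Qed.

Module C2.
Definition a := tk2 0 1.
Definition p := f2 (1/2) (1/2).
Definition qI := f2 (3/4) (1/4).
Definition qJ := f2 (4/5) (1/5).
Definition pif := sg2 (1/3) 0 (2/3) 1.
Ltac V := rewrite /a /p /qI /qJ /pif; U.
Lemma sp : forall t, \sum_(s : T2) pif s t = 1.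
Proof. apply: sum_sg2; lra. Qed.

Lemma case2 : Ex 2.
Proof.
exists T2; split; first exact: cardT2.
exists [fset a], p, qI, qJ, T1, (pin T2), T2, pif.
split; [split|split; [split|split; [|split]]].
- exact: firm1.
- apply: fs2; lra.
- apply: fs2; lra.
- apply: fs2; lra.
- move=> t t'; V; c2 t; c2 t'; pks; intros; lra.
- exact: ss_pin2.
- split.
  + move=> s t; V; c2 s; c2 t; pks; apply/andP; split; lra.
  + exact: sp.
  + move=> s; V; c2 s; [exists (FSetSub T2_0) | exists (FSetSub T2_1)]; pks; lra.
- apply: bw_pin; exact: sp.
- move=> /(_ (FSetSub T2_0) (FSetSub T2_1)) /=; V; pks; move=> h; have := h ltr01; lra.
- move=> j hj hjk; case: j hj hjk => [|[|[|[|[|j]]]]] // _ hjk;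
    try (by exfalso; apply: hjk); rewrite /property.
  + apply: mono2; lra.
  + move=> s s' t t'; V; c2 s; c2 s'; c2 t; c2 t'; pks; intros; lra.
  + move=> t t'; V; c2 t; c2 t'; pks; intros; lra.
  + by split; apply: slight1; exact: sp.
- have -> : Wage [fset a] p qI pif = 5/18 by wcomp; V; pks; field.
  have -> : Wage [fset a] p qJ pif = 5/22 by wcomp; V; pks; field.
  have -> : Wage [fset a] p qI (pin T2) = 1/4 by wcomp; rewrite /pin; V; pks; field.
  have -> : Wage [fset a] p qJ (pin T2) = 1/5 by wcomp; rewrite /pin; V; pks; field.
  lra.
Qed.
End C2.

Module C3.
Definition a := tk2 0 1.
Definition p := f2 (4/5) (1/5).
Definition qI := f2 (1/4) (3/4).
Definition qJ := f2 (1/3) (2/3).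
Definition pif := sg2 1 (1/2) 0 (1/2).
Ltac V := rewrite /a /p /qI /qJ /pif; U.
Lemma sp : forall t, \sum_(s : T2) pif s t = 1.
Proof. apply: sum_sg2; lra. Qed.

Lemma case3 : Ex 3.
Proof.
exists T2; split; first exact: cardT2.
exists [fset a], p, qI, qJ, T1, (pin T2), T2, pif.
split; [split|split; [split|split; [|split]]].
- exact: firm1.
- apply: fs2; lra.
- apply: fs2; lra.
- apply: fs2; lra.
- move=> t t'; V; c2 t; c2 t'; pks; intros; lra.
- exact: ss_pin2.
- split.
  + move=> s t; V; c2 s; c2 t; pks; apply/andP; split; lra.
  + exact: sp.
  + move=> s; V; c2 s; [exists (FSetSub T2_0) | exists (FSetSub T2_1)]; pks; lra.
- apply: bw_pin; exact: sp.
- move=> /(_ (FSetSub T2_0) (FSetSub T2_1)) /=; V; pks; move=> h; have := h ltr01; lra.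
- move=> j hj hjk; case: j hj hjk => [|[|[|[|[|j]]]]] // _ hjk;
    try (by exfalso; apply: hjk); rewrite /property.
  + apply: mono2; lra.
  + move=> s s' t t'; V; c2 s; c2 s'; c2 t; c2 t'; pks; intros; lra.
  + move=> t t'; V; c2 t; c2 t'; pks; intros; lra.
  + by split; apply: slight1; exact: sp.
- have -> : Wage [fset a] p qI pif = 16/25 by wcomp; V; pks; field.
  have -> : Wage [fset a] p qJ pif = 11/20 by wcomp; V; pks; field.
  have -> : Wage [fset a] p qI (pin T2) = 3/4 by wcomp; rewrite /pin; V; pks; field.
  have -> : Wage [fset a] p qJ (pin T2) = 2/3 by wcomp; rewrite /pin; V; pks; field.
  lra.
Qed.
End C3.

Module C0.
Definition a0 : task T2 := [ffun t => pk 1 0 0 (val t)].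
Definition p : T2 -> real := fun t => pk (1/2) (1/2) 0 (val t).
Definition qI : T2 -> real := fun t => pk (1/3) (2/3) 0 (val t).
Definition qJ : T2 -> real := fun t => pk (2/3) (1/3) 0 (val t).
Definition pif : T2 -> T2 -> real :=
  fun s t => pk (pk 1 0 0 (val t)) (pk 0 1 0 (val t)) 0 (val s).
Ltac U := rewrite /p /qI /qJ /pif /a0 /=.

Lemma sum_pif t : \sum_(s : T2) pif s t = 1.
Proof. rewrite sumT2; U; c2 t; pks; lra. Qed.


Lemma case0 : Ex 0.
Proof.
exists T2; split; first exact: cardT2.
exists [fset a0], p, qI, qJ, T1, (pin T2), T2, pif.
split; [split|split; [split|split; [|split]]].
- exact: firm1.
- apply: fs2; lra.
- apply: fs2; lra.
- apply: fs2; lra.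
- move=> t t'; U; c2 t; c2 t'; pks; lra.
- exact: ss_pin2.
- split.
  + move=> s t; U; c2 s; c2 t; pks; apply/andP; split; lra.
  + exact: sum_pif.
  + move=> s; U; c2 s; [exists (FSetSub T2_0) | exists (FSetSub T2_1)]; pks; lra.
- apply: bw_pin; exact: sum_pif.
- move=> /(_ a0 (fset11 a0) (FSetSub T2_0) (FSetSub T2_1)) /=.
  rewrite /a0 !ffunE; pks; move=> h; have := h ltr01; lra.
- move=> j hj hjk; case: j hj hjk => [|[|[|[|[|j]]]]] // _ hjk;
    try (by exfalso; apply: hjk); rewrite /property.
  + move=> s s' t t'; U; c2 s; c2 s'; c2 t; c2 t'; pks; intros; lra.
  + move=> t t'; U; c2 t; c2 t'; pks; intros; lra.
  + move=> t t'; U; c2 t; c2 t'; pks; intros; lra.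
  + by split; apply: slight1; exact: sum_pif.
- have -> : Wage [fset a0] p qI pif = 1/2 by wcomp; U; pks; field.
  have -> : Wage [fset a0] p qJ pif = 1/2 by wcomp; U; pks; field.
  have -> : Wage [fset a0] p qI (pin T2) = 1/3 by wcomp; rewrite /pin; U; pks; field.
  have -> : Wage [fset a0] p qJ (pin T2) = 2/3 by wcomp; rewrite /pin; U; pks; field.
  lra.
Qed.
End C0.


Lemma divleE (d n1 n2 : real) : 0 < d -> (n1 / d <= n2 / d) = (n1 <= n2).
Proof. by move=> hd; rewrite ler_pM2r // invr_gt0. Qed.

Lemma maxA2l (Th : {fset real}) (a b : task Th) (F : task Th -> real) :
  F b <= F a -> Defs.maxA [fset a; b] F = F a.
Proof.
move=> h; apply: maxA_eq; first by rewrite !inE eqxx.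
by move=> a'; rewrite !inE => /orP [] /eqP ->.
Qed.
Lemma maxA2r (Th : {fset real}) (a b : task Th) (F : task Th -> real) :
  F a <= F b -> Defs.maxA [fset a; b] F = F b.
Proof.
move=> h; apply: maxA_eq; first by rewrite !inE eqxx orbT.
by move=> a'; rewrite !inE => /orP [] /eqP ->.
Qed.

Module C4.
Definition a1 := tk2 0 1.
Definition a2 := tk2 (1/2) (3/4).
Definition p := f2 (1/2) (1/2).
Definition qI := f2 (1/2) (1/2).
Definition qJ := f2 (3/4) (1/4).
Definition pif := sg2 (3/4) 0 (1/4) 1.
Definition A := [fset a1; a2].
Ltac V := rewrite /a1 /a2 /p /qI /qJ /pif /pin; U.
Lemma sp : forall t, \sum_(s : T2) pif s t = 1.
Proof. apply: sum_sg2; lra. Qed.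

Ltac cmp := rewrite !expval_post ?sumT1 ?sumT2 /= ?ffunE; V; pks;
  rewrite divleE; lra.

Lemma case4 : Ex 4.
Proof.
exists T2; split; first exact: cardT2.
exists A, p, qI, qJ, T1, (pin T2), T2, pif.
split; [split|split; [split|split; [|split]]].
- by apply/fset0Pn; exists a1; rewrite !inE eqxx.
- apply: fs2; lra.
- apply: fs2; lra.
- apply: fs2; lra.
- move=> t t'; V; c2 t; c2 t'; pks; intros; lra.
- exact: ss_pin2.
- split.
  + move=> s t; V; c2 s; c2 t; pks; apply/andP; split; lra.
  + exact: sp.
  + move=> s; V; c2 s; [exists (FSetSub T2_0) | exists (FSetSub T2_1)]; pks; lra.
- apply: bw_pin; exact: sp.
- move=> [[g [[_ hg1 _] H]] _].
  have g1 : g (FSetSub T1_0) (FSetSub T2_1) = 1 by have := hg1 (FSetSub T2_1); rewrite sumT1.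
  have hg : 0 < g (FSetSub T1_0) (FSetSub T2_1) by rewrite g1 ltr01.
  have [a [ha1 ha2]] := H (FSetSub T1_0) (FSetSub T2_1) hg.
  case: ha1 => aA h1; case: ha2 => _ h2.
  move: aA; rewrite !inE => /orP [] /eqP ea; subst a.
  + have := h1 a2 ltac:(by rewrite !inE eqxx orbT).
    rewrite !expval_post ?sumT1 ?sumT2 /= ?ffunE; V; pks; rewrite divleE; lra.
  + have := h2 a1 ltac:(by rewrite !inE eqxx).
    rewrite !expval_post ?sumT1 ?sumT2 /= ?ffunE; V; pks; rewrite divleE; lra.
- move=> j hj hjk; case: j hj hjk => [|[|[|[|[|j]]]]] // _ hjk;
    try (by exfalso; apply: hjk); rewrite /property.
  + move=> b; rewrite !inE => /orP [] /eqP -> t t'; V; rewrite !ffunE;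
      c2 t; c2 t'; pks; intros; lra.
  + move=> s s' t t'; V; c2 s; c2 s'; c2 t; c2 t'; pks; intros; lra.
  + move=> t t'; V; c2 t; c2 t'; pks; intros; lra.
  + move=> t t'; V; c2 t; c2 t'; pks; intros; lra.
- have -> : Wage A p qI pif = 11/16.
    rewrite /Wage /wage !sumT2.
    rewrite (@maxA2r _ a1 a2 (expval (posterior qI pif (FSetSub T2_0)))); last by cmp.
    rewrite (@maxA2l _ a1 a2 (expval (posterior qI pif (FSetSub T2_1)))); last by cmp.
    rewrite !expval_post !sumT2 /= ?ffunE; V; pks; by field.
  have -> : Wage A p qJ pif = 33/56.
    rewrite /Wage /wage !sumT2.
    rewrite (@maxA2r _ a1 a2 (expval (posterior qJ pif (FSetSub T2_0)))); last by cmp.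
    rewrite (@maxA2r _ a1 a2 (expval (posterior qJ pif (FSetSub T2_1)))); last by cmp.
    rewrite !expval_post !sumT2 /= ?ffunE; V; pks; by field.
  have -> : Wage A p qI (pin T2) = 5/8.
    rewrite /Wage /wage !sumT2 !sumT1.
    rewrite (@maxA2r _ a1 a2 (expval (posterior qI (pin T2) (FSetSub T1_0)))); last by cmp.
    rewrite !expval_post !sumT2 ?sumT1 /= ?ffunE; V; pks; by field.
  have -> : Wage A p qJ (pin T2) = 9/16.
    rewrite /Wage /wage !sumT2 !sumT1.
    rewrite (@maxA2r _ a1 a2 (expval (posterior qJ (pin T2) (FSetSub T1_0)))); last by cmp.
    rewrite !expval_post !sumT2 ?sumT1 /= ?ffunE; V; pks; by field.
  lra.
Qed.
End C4.


Module C1.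
Definition a : task T3 := [ffun t => pk 0 1 2 (val t)].
Definition p : T3 -> real := fun t => pk (1/3) (1/3) (1/3) (val t).
Definition qI : T3 -> real := fun t => pk (1/3) (1/3) (1/3) (val t).
Definition qJ : T3 -> real := fun t => pk (1/2) (1/4) (1/4) (val t).
Definition pif : T2 -> T3 -> real :=
  fun s t => pk (pk (3/4) 0 1 (val t)) (pk (1/4) 1 0 (val t)) 0 (val s).
Ltac V := rewrite /a /p /qI /qJ /pif /pin /=.

Lemma sp : forall t, \sum_(s : T2) pif s t = 1.
Proof. move=> t; rewrite sumT2; V; c3 t; pks; lra. Qed.

Lemma fs3 (c0 c1 c2 : real) : 0 < c0 -> 0 < c1 -> 0 < c2 -> c0 + c1 + c2 = 1 ->
  full_support (fun t : T3 => pk c0 c1 c2 (val t)).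
Proof.
move=> h0 h1 h2 hs; split; first by move=> t; c3 t; pks.
by rewrite sumT3; pks.
Qed.

Lemma case1 : Ex 1.
Proof.
exists T3; split; first exact: cardT3.
exists [fset a], p, qI, qJ, T1, (pin T3), T2, pif.
split; [split|split; [split|split; [|split]]].
- exact: firm1.
- apply: fs3; lra.
- apply: fs3; lra.
- apply: fs3; lra.
- move=> t t'; V; c3 t; c3 t'; pks; intros; lra.
- exact: ss_pin3.
- split.
  + move=> s t; V; c2 s; c3 t; pks; apply/andP; split; lra.
  + exact: sp.
  + move=> s; V; c2 s; [exists (FSetSub T3_0) | exists (FSetSub T3_0)]; pks; lra.
- apply: bw_pin; exact: sp.
- move=> /(_ (FSetSub T2_0) (FSetSub T2_1) (FSetSub T3_1) (FSetSub T3_2)) /=; V; pks.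
  move=> h; have := h ltr01 ltac:(lra); lra.
- move=> j hj hjk; case: j hj hjk => [|[|[|[|[|j]]]]] // _ hjk;
    try (by exfalso; apply: hjk); rewrite /property.
  + move=> b /fset1P -> t t'; V; rewrite !ffunE; c3 t; c3 t'; pks; intros; lra.
  + move=> t t'; V; c3 t; c3 t'; pks; intros; lra.
  + move=> t t'; V; c3 t; c3 t'; pks; intros; lra.
  + by split; apply: slight1; exact: sp.
- have -> : Wage [fset a] p qI pif = 1 by wcomp; V; pks; field.
  have -> : Wage [fset a] p qJ pif = 67/90 by wcomp; V; pks; field.
  have -> : Wage [fset a] p qI (pin T3) = 1 by wcomp; V; pks; field.
  have -> : Wage [fset a] p qJ (pin T3) = 3/4 by wcomp; V; pks; field.
  lra.
Qed.
End C1.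

Local Open Scope ring_scope.
Local Open Scope fset_scope.

Theorem proposition2 :
  forall k : nat, (k < 5)%N ->
  exists (Theta : {fset real}), (2 <= #|` Theta|)%N /\
  exists (A : {fset task Theta}) (p qI qJ : Theta -> real)
         (S : {fset real}) (pi : S -> Theta -> real)
         (S' : {fset real}) (pi' : S' -> Theta -> real),
    [/\ firm A, full_support p, full_support qI, full_support qJ
      & LR_ge qI qJ] /\
    [/\ signal_structure pi, signal_structure pi' & blackwell_ge pi' pi] /\
    ~ property k A p qI qJ pi pi' /\
    (forall j : nat, (j < 5)%N -> j <> k -> property j A p qI qJ pi pi') /\
    ~ (Wage A p qI pi' - Wage A p qJ pi' <= Wage A p qI pi - Wage A p qJ pi).
Proof.
move=> k hk.
case: k hk => [|[|[|[|[|k]]]]] // _.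
- exact: C0.case0.
- exact: C1.case1.
- exact: C2.case2.
- exact: C3.case3.
- exact: C4.case4.
Qed.
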